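(* Let $G$ be a finite, simple, undirected, connected graph with at least two vertices and let $v \in V(G)$. The following statements are equivalent: (i) $v$ is the $\mathcal{L}$-root leaf of some DFS ordering of $G$ starting in $v$; (ii) $v$ is the $\mathcal{L}$-root leaf of every DFS ordering of $G$ starting in $v$; (iii) $v$ is the $\mathcal{L}$-root leaf of some MCS ordering of $G$; (iv) $v$ is the $\mathcal{L}$-root leaf of some GS ordering of $G$; (v) $v$ is an $\mathcal{L}$-branch leaf of some GS ordering of $G$; (vi) $v$ is an $\mathcal{F}$-branch leaf of some GS ordering of $G$; (vii) $v$ is the end-vertex (last vertex) of some GS ordering of $G$; (viii) $v$ is not a cut vertex of $G$.
   Context: A vertex ordering of $G$ is a bijection $\sigma:\{1,\dots,n\}\to V(G)$; $u \prec_\sigma w$ means $u$ comes before $w$. Searches are defined by the following label search: initially every vertex has label $\emptyset$; for $i=1,\dots,n$, choose any unnumbered vertex $x$ such that there is no unnumbered $y$ with $\mathrm{label}(x) \prec_{\mathcal{A}} \mathrm{label}(y)$, set $\sigma(i)=x$, and add $i$ to the labels of all unnumbered neighbors of $x$. The orderings produced this way are the $\mathcal{A}$-orderings. Generic Search (GS): $A \prec B$ iff $A=\emptyset$ and $B\neq\emptyset$. Depth First Search (DFS): $A \prec B$ iff ($A=\emptyset$ and $B\neq\emptyset$) or $\max(A)<\max(B)$. Maximum Cardinality Search (MCS): $A \prec B$ iff $|A|<|B|$. For a GS ordering $\sigma$ of a connected graph $G$, the $\mathcal{F}$-tree of $\sigma$ is the spanning tree containing, for each vertex $v\neq\sigma(1)$,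 the edge from $v$ to its leftmost neighbor in $\sigma$; the $\mathcal{L}$-tree of $\sigma$ contains, for each $v \neq \sigma(1)$, the edge from $v$ to its rightmost neighbor $w$ with $w \prec_\sigma v$. A vertex is an $\mathcal{F}$-leaf ($\mathcal{L}$-leaf) of $\sigma$ if it is a leaf of the $\mathcal{F}$-tree ($\mathcal{L}$-tree) of $\sigma$; it is the $\mathcal{F}$-root leaf ($\mathcal{L}$-root leaf) if additionally it is $\sigma(1)$, and an $\mathcal{F}$-branch leaf ($\mathcal{L}$-branch leaf) otherwise. *)

(* Defs.v *)
From mathcomp Require Import all_boot.
Set Implicit Arguments. Unset Strict Implicit. Unset Printing Implicit Defensive.

Definition simple_graph (T : finType) (e : rel T) : Prop :=
  symmetric e /\ irreflexive e.

Definition connected_graph (T : finType) (e : rel T) : Prop :=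
  forall x y : T, connect e x y.

Definition cut_vertex (T : finType) (e : rel T) (v : T) : Prop :=
  exists x y : T, [/\ x != v, y != v &
    ~~ connect (fun a b => [&& e a b, a != v & b != v]) x y].

(* A vertex ordering sigma is a sequence s with sigma(i) = nth _ s (i-1)
   listing every vertex exactly once. *)
Definition vertex_ordering (T : finType) (s : seq T) : Prop :=
  perm_eq s (enum T).

(* label of vertex x just before the vertex at (0-based) position k is
   chosen: the set of (1-based) numbers j <= k with sigma(j) adjacent to x,
   represented as an increasing list. *)
Definition label (T : finType) (e : rel T) (s : seq T) (k : nat) (x : T)
  : seq nat := [seq j <- iota 1 k | e (nth x s j.-1) x].

Definition GS_prec (A B : seq nat) : bool := (A == [::]) && (B != [::]).
Definition DFS_prec (A B : seq nat) : bool :=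
  ((A == [::]) && (B != [::])) || (\max_(j <- A) j < \max_(j <- B) j).
Definition MCS_prec (A B : seq nat) : bool := size A < size B.

Definition label_search_ordering (T : finType) (e : rel T)
    (prec : seq nat -> seq nat -> bool) (s : seq T) : Prop :=
  vertex_ordering s /\
  forall (k : nat) (y : T), k < size s -> y \notin take k s ->
    ~~ prec (label e s k (nth y s k)) (label e s k y).

Definition GS_ordering T e s := @label_search_ordering T e GS_prec s.
Definition DFS_ordering T e s := @label_search_ordering T e DFS_prec s.
Definition MCS_ordering T e s := @label_search_ordering T e MCS_prec s.

Definition F_parent (T : finType) (e : rel T) (s : seq T) (v w : T) : bool :=
  e v w && [forall w' : T, e v w' ==> (index w s <= index w' s)].

Definition L_parent (T : finType) (e : rel T) (s : seq T) (v w : T) : bool :=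
  [&& e v w, index w s < index v s &
   [forall w' : T, (e v w' && (index w' s < index v s)) ==>
                   (index w' s <= index w s)]].

Definition tree_edge (T : finType) (s : seq T) (par : T -> T -> bool)
  (u w : T) : bool :=
  ((index u s != 0) && par u w) || ((index w s != 0) && par w u).

Definition tree_leaf (T : finType) (s : seq T) (par : T -> T -> bool) (u : T)
  : bool := #|[set w | tree_edge s par u w]| == 1.

Definition F_leaf T e s u := @tree_leaf T s (F_parent e s) u.
Definition L_leaf T e s u := @tree_leaf T s (L_parent e s) u.

Definition F_root_leaf T e s u := @F_leaf T e s u && (index u s == 0).
Definition F_branch_leaf T e s u := @F_leaf T e s u && (index u s != 0).
Definition L_root_leaf T e s u := @L_leaf T e s u && (index u s == 0).
Definition L_branch_leaf T e s u := @L_leaf T e s u && (index u s != 0).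

(* Main.v *)
Require Import Defs.
From mathcomp Require Import all_boot.
From mathcomp Require Import zify.
Set Implicit Arguments. Unset Strict Implicit. Unset Printing Implicit Defensive.

Section Th.
Variables (T : finType) (e : rel T).
Hypothesis esym : symmetric e.
Hypothesis eirr : irreflexive e.
Hypothesis econ : connected_graph e.

Definition ev (v : T) := fun a b => [&& e a b, a != v & b != v].

Lemma ev_sym v : symmetric (ev v).
Proof. by move=> a b; rewrite /ev esym andbCA andbA [(b != v) && _]andbC -andbA andbCA. Qed.

Section VO.
Variable s : seq T.
Hypothesis vo : vertex_ordering s.

Lemma vo_uniq : uniq s.
Proof. by rewrite (perm_uniq vo) enum_uniq. Qed.
Lemma vo_mem x : x \in s.
Proof. by rewrite (perm_mem vo) mem_enum. Qed.
Lemma vo_size : size s = #|T|.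
Proof. by rewrite (perm_size vo) cardT. Qed.
Lemma vo_ilt x : index x s < size s.
Proof. by rewrite index_mem vo_mem. Qed.
Lemma vo_nth x0 x : nth x0 s (index x s) = x.
Proof. by rewrite nth_index ?vo_mem. Qed.
Lemma vo_idx x0 k : k < size s -> index (nth x0 s k) s = k.
Proof. by move=> h; rewrite index_uniq ?vo_uniq. Qed.
Lemma vo_inj x y : index x s = index y s -> x = y.
Proof. by move=> h; rewrite -(vo_nth x x) h vo_nth. Qed.
Lemma vo_take k x : (x \in take k s) = (index x s < k).
Proof. by rewrite in_take ?vo_mem. Qed.

Lemma mem_label k x u : k <= size s ->
  ((index u s).+1 \in label e s k x) = (index u s < k) && e u x.
Proof.
move=> hk; rewrite /label mem_filter mem_iota /= vo_nth andbC.
by congr (_ && _); rewrite add1n ltnS.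
Qed.

Lemma label_elem k x j : k <= size s -> j \in label e s k x ->
  exists u, [/\ j = (index u s).+1, index u s < k & e u x].
Proof.
move=> hk; rewrite /label mem_filter mem_iota => /andP[hx /andP[h1 h2]].
exists (nth x s j.-1); rewrite vo_idx; last by lia.
split => //; lia.
Qed.

Lemma label_ge1 k x j : j \in label e s k x -> 0 < j <= k.
Proof. by rewrite /label mem_filter mem_iota => /andP[_]; lia. Qed.

Lemma label0 x : label e s 0 x = [::].
Proof. by []. Qed.

End VO.
Lemma cross (r : rel T) (A : pred T) a b :
  connect r a b -> A a -> ~~ A b -> exists u w, [/\ A u, ~~ A w & r u w].
Proof.
move/connectP=> [p]; elim: p a => [|c p IH] a /=.
  by move=> _ -> h1; rewrite h1.
move=> /andP[rac pc] eb Aa nAb.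
case Ac: (A c); first exact: (IH c pc eb Ac nAb).
by exists a, c; rewrite Ac.
Qed.

Lemma GS_earlier s x : GS_ordering e s -> 0 < index x s ->
  exists u, e x u /\ index u s < index x s.
Proof.
move=> [vo gs] hx.
have hk : index x s < size s by apply: vo_ilt.
case Hl: (label e s (index x s) x) => [|j l]; last first.
  have : j \in label e s (index x s) x by rewrite Hl mem_head.
  case/(label_elem vo (ltnW hk)) => u [_ hu eux].
  by exists u; rewrite esym.
have := econ (nth x s 0) x.
move=> /(cross (A := fun z => index z s < index x s)).
rewrite vo_idx ?(leq_ltn_trans _ hk) // ltnn => /(_ hx isT) [u [w [hu hw euw]]].
have := gs (index x s) w hk; rewrite (vo_take vo) hw => /(_ isT).
rewrite (vo_nth vo) Hl /GS_prec eqxx /=.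
case Hw: (label e s (index x s) w) => [|j' l'] //.
have : (index u s).+1 \in label e s (index x s) w by rewrite mem_label ?(ltnW hk) // hu.
by rewrite Hw.
Qed.

Lemma GS_prefix s v x : GS_ordering e s -> index x s < index v s ->
  connect (ev v) (nth v s 0) x.
Proof.
move=> gs; have vo := gs.1.
move: {2}(index x s) (leqnn (index x s)) => n; elim: n x => [|n IH] x.
  rewrite leqn0 => /eqP h _; by rewrite -h vo_nth.
rewrite leq_eqVlt => /orP[/eqP hn|]; last by move=> h; apply: IH.
case: (posnP (index x s)) => [h0|hpos hxv].
  by move=> _; rewrite -h0 vo_nth.
have [u [exu hu]] := GS_earlier gs hpos.
apply: connect_trans (IH u _ _) (connect1 _); first by lia.
  exact: ltn_trans hxv.
rewrite /ev esym exu /=; apply/andP; split.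
  by apply/eqP=> uv; move: hxv hu; rewrite uv; lia.
by apply/eqP=> uv; move: hxv; rewrite uv ltnn.
Qed.

Lemma cut_child s v a : GS_ordering e s -> cut_vertex e v -> a != v ->
  (forall x, index x s < index v s -> connect (ev v) a x) ->
  exists w, [/\ w != v, ~~ connect (ev v) a w, index v s < index w s, e w v &
    forall u, e w u -> index u s < index w s -> u = v].
Proof.
move=> gs [x [y [xv yv nxy]]] av hpre; have vo := gs.1.
have csym := sym_connect_sym (@ev_sym v).
have [z [zv nz]] : exists z, z != v /\ ~~ connect (ev v) a z.
  case cx: (connect (ev v) a x); last by exists x; rewrite cx.
  case cy: (connect (ev v) a y); last by exists y; rewrite cy.
  by move: nxy; rewrite (connect_trans _ cy) // csym.
pose D := [pred z | (z != v) && ~~ connect (ev v) a z].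
have Dz : D z by rewrite /= zv.
case: (arg_minnP (fun z => index z s) Dz) => w /andP[wv nw] minw.
have ivw : index v s < index w s.
  case: (ltngtP (index v s) (index w s)) => // h.
    by move: nw; rewrite hpre.
  by move: wv; rewrite (vo_inj vo h) eqxx.
have only : forall u, e w u -> index u s < index w s -> u = v.
  move=> u ewu hu; apply/eqP; apply: contraT => uv.
  case cu: (connect (ev v) a u).
    move: nw; rewrite (connect_trans cu (connect1 (_ : ev v u w))) //.
    by rewrite /ev esym ewu uv wv.
  by have := minw u; rewrite /= uv cu /= leqNgt hu => /(_ isT).
have [u [ewu hu]] := GS_earlier gs (leq_ltn_trans (leq0n _) ivw).
exists w; split => //; by rewrite -(only u ewu hu).
Qed.

Lemma Lpar_only s w v : e w v -> index v s < index w s ->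
  (forall u, e w u -> index u s < index w s -> u = v) -> L_parent e s w v.
Proof.
move=> ewv iv h; rewrite /L_parent ewv iv /=.
by apply/forallP=> u; apply/implyP=> /andP[ewu iu]; rewrite (h u ewu iu).
Qed.

Lemma Fpar_only s w v : e w v -> index v s < index w s ->
  (forall u, e w u -> index u s < index w s -> u = v) -> F_parent e s w v.
Proof.
move=> ewv iv h; rewrite /F_parent ewv /=.
apply/forallP=> u; apply/implyP=> ewu.
case: (ltnP (index u s) (index w s)) => hu; first by rewrite (h u ewu hu).
exact: leq_trans (ltnW iv) hu.
Qed.

Lemma tree_two (s : seq T) (par : T -> T -> bool) u a b : a != b -> tree_edge s par u a ->
  tree_edge s par u b -> ~~ tree_leaf s par u.
Proof.
move=> ab ha hb; rewrite /tree_leaf.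
have : [set a; b] \subset [set w | tree_edge s par u w].
  by apply/subsetP=> w; rewrite !inE => /orP[]/eqP->.
move/subset_leq_card; rewrite cards2 ab.
by case: #|_| => [|[|]].
Qed.

Lemma tree_one (s : seq T) (par : T -> T -> bool) u a : (forall w, tree_edge s par u w = (w == a)) ->
  tree_leaf s par u.
Proof.
move=> h; rewrite /tree_leaf.
have -> : [set w | tree_edge s par u w] = [set a] by apply/setP=> w; rewrite !inE h.
by rewrite cards1.
Qed.

Lemma nec_root s v : GS_ordering e s -> 1 < #|T| -> index v s = 0 ->
  L_leaf e s v -> ~ cut_vertex e v.
Proof.
move=> gs hT iv0 leaf cut; have vo := gs.1.
have hs : 1 < size s by rewrite (vo_size vo).
pose a := nth v s 1.
have ia : index a s = 1 by rewrite vo_idx.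
have av : a != v by apply/eqP=> h; move: ia; rewrite h iv0.
have hpre : forall x, index x s < index v s -> connect (ev v) a x by move=> x; rewrite iv0.
have [w [wv nw ivw ewv only]] := cut_child gs cut av hpre.
have wa : w != a by apply/eqP=> h; move: nw; rewrite h connect0.
have onlya : forall u, e a u -> index u s < index a s -> u = v.
  by move=> u _; rewrite ia ltnS leqn0 -iv0 => /eqP/(vo_inj vo).
have ia0 : 0 < index a s by rewrite ia.
have [u [eau hu]] := GS_earlier gs ia0.
have eav : e a v by rewrite -(onlya u eau hu).
move: leaf; rewrite /L_leaf; apply/negP.
apply: (tree_two wa).
  by rewrite /tree_edge iv0 /= -lt0n (leq_ltn_trans (leq0n _) ivw) Lpar_only.
by rewrite /tree_edge iv0 /= ia /= Lpar_only // ia iv0.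
Qed.

Lemma nec_child s v : GS_ordering e s -> 0 < index v s -> cut_vertex e v ->
  exists w, [/\ index v s < index w s, e w v &
    forall u, e w u -> index u s < index w s -> u = v].
Proof.
move=> gs hv cut; have vo := gs.1.
have av : nth v s 0 != v.
  by apply/eqP=> h; move: hv; rewrite -{1}h vo_idx ?ltnn // (leq_ltn_trans (leq0n _) (vo_ilt vo v)).
have [w [_ _ ivw ewv only]] := cut_child gs cut av (fun x h => GS_prefix gs h).
by exists w.
Qed.

Lemma Lpar_exists s v : GS_ordering e s -> 0 < index v s ->
  exists p, L_parent e s v p.
Proof.
move=> gs hv; have [u [evu hu]] := GS_earlier gs hv.
pose P := [pred z | e v z && (index z s < index v s)].
have Pu : P u by rewrite /= evu hu.
case: (arg_maxnP (fun z => index z s) Pu) => p /andP[evp hp] maxp.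
exists p; rewrite /L_parent evp hp /=; apply/forallP=> z; apply/implyP=> Pz.
exact: maxp.
Qed.

Lemma Fpar_exists s v : GS_ordering e s -> 0 < index v s ->
  exists p, F_parent e s v p /\ index p s < index v s.
Proof.
move=> gs hv; have [u [evu hu]] := GS_earlier gs hv.
pose P := [pred z | e v z].
have Pu : P u by rewrite /= evu.
case: (arg_minnP (fun z => index z s) Pu) => p /= evp minp.
exists p; split; last exact: leq_ltn_trans (minp u evu) hu.
by rewrite /F_parent evp /=; apply/forallP=> z; apply/implyP=> Pz; apply: minp.
Qed.

Lemma nec_Lbranch s v : GS_ordering e s -> L_branch_leaf e s v -> ~ cut_vertex e v.
Proof.
move=> gs /andP[leaf hv] cut; rewrite -lt0n in hv; have vo := gs.1.
have [w [ivw ewv only]] := nec_child gs hv cut.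
have [p pp] := Lpar_exists gs hv.
have pw : p != w.
  apply/eqP=> h; move: pp; rewrite h /L_parent => /and3P[_ + _].
  by rewrite ltnNge (ltnW ivw).
move: leaf; rewrite /L_leaf; apply/negP; apply: (tree_two pw).
  by rewrite /tree_edge -lt0n hv pp.
rewrite /tree_edge; apply/orP; right; apply/andP; split; last exact: Lpar_only.
by rewrite -lt0n (leq_ltn_trans (leq0n _) ivw).
Qed.

Lemma nec_Fbranch s v : GS_ordering e s -> F_branch_leaf e s v -> ~ cut_vertex e v.
Proof.
move=> gs /andP[leaf hv] cut; rewrite -lt0n in hv; have vo := gs.1.
have [w [ivw ewv only]] := nec_child gs hv cut.
have [p [pp ipv]] := Fpar_exists gs hv.
have pw : p != w.
  by apply/eqP=> h; move: ipv; rewrite h ltnNge (ltnW ivw).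
move: leaf; rewrite /F_leaf; apply/negP; apply: (tree_two pw).
  by rewrite /tree_edge -lt0n hv pp.
rewrite /tree_edge; apply/orP; right; apply/andP; split; last exact: Fpar_only.
by rewrite -lt0n (leq_ltn_trans (leq0n _) ivw).
Qed.

Lemma nec_last s v : GS_ordering e s -> 1 < #|T| -> index v s = (size s).-1 ->
  ~ cut_vertex e v.
Proof.
move=> gs hT hv cut; have vo := gs.1.
have hv0 : 0 < index v s by rewrite hv (vo_size vo); lia.
have [w [ivw _ _]] := nec_child gs hv0 cut.
by move: (vo_ilt vo w); rewrite ltnNge; move: ivw; rewrite hv; lia.
Qed.

Definition Qcond (s : seq T) := forall k y, k < size s -> y \notin take k s ->
  ~~ ((size (label e s k (nth y s k)) <= size (label e s k y)) &&
      (\max_(j <- label e s k (nth y s k)) j < \max_(j <- label e s k y) j)).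

Lemma DFS_GS s : DFS_ordering e s -> GS_ordering e s.
Proof.
move=> [vo h]; split => // k y hk hy; have := h k y hk hy.
by rewrite /DFS_prec /GS_prec; apply: contra => ->.
Qed.

Lemma MCS_GS s : MCS_ordering e s -> GS_ordering e s.
Proof.
move=> [vo h]; split => // k y hk hy; have := h k y hk hy.
rewrite /MCS_prec /GS_prec; apply: contra => /andP[/eqP -> ].
by case: (label e s k y).
Qed.

Lemma DFS_Q s : DFS_ordering e s -> Qcond s.
Proof.
move=> [vo h] k y hk hy; have := h k y hk hy.
by rewrite /DFS_prec; apply: contra => /andP[_ ->]; rewrite orbT.
Qed.

Lemma suff_root s v : GS_ordering e s -> Qcond s -> 1 < #|T| -> index v s = 0 ->
  ~ cut_vertex e v -> L_root_leaf e s v.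
Proof.
move=> gs Q hT iv0 ncut; have vo := gs.1.
have hs : 1 < size s by rewrite (vo_size vo).
pose a := nth v s 1.
have ia : index a s = 1 by rewrite vo_idx.
have av : a != v by apply/eqP=> h; move: ia; rewrite h iv0.
rewrite /L_root_leaf iv0 eqxx andbT /L_leaf; apply: (tree_one (a := a)) => w.
rewrite /tree_edge iv0 /=.
have ia0 : 0 < index a s by rewrite ia.
have onlya : forall u, e a u -> index u s < index a s -> u = v.
  by move=> u _; rewrite ia ltnS leqn0 -iv0 => /eqP/(vo_inj vo).
have [u [eau hu]] := GS_earlier gs ia0.
have eav : e a v by rewrite -(onlya u eau hu).
case: (eqVneq w a) => [->|wa]; first by rewrite ia /= Lpar_only // ia iv0.
apply/negP=> /andP[hw0 /and3P[ewv ivw /forallP par]].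
have hw2 : 1 < index w s.
  case: (ltngtP (index w s) 1) => // h; first by move: hw0; lia.
  by move: wa; rewrite -ia in h; rewrite (vo_inj vo h) eqxx.
set k := index w s.
have hk : k < size s by apply: vo_ilt.
have lw1 : forall j, j \in label e s k w -> j = 1.
  move=> j /(label_elem vo (ltnW hk)) [z [-> hz ezw]].
  have := par z; rewrite esym ezw hz /= iv0 leqn0 => /eqP -> //.
have sw : size (label e s k w) <= 1.
  have -> : 1 = size [:: 1] by [].
  apply: uniq_leq_size; first by rewrite filter_uniq // iota_uniq.
  by move=> j /lw1 ->; rewrite mem_head.
have mw : \max_(j <- label e s k w) j <= 1.
  by apply/bigmax_leqP_seq => j /lw1 -> _.
have wv : w != v by apply/eqP=> h; move: hw0; rewrite h iv0.
have cwa : connect (ev v) w a.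
  case c: (connect (ev v) w a) => //; exfalso.
  by apply: ncut; exists w, a; split => //; rewrite /ev in c; rewrite c.
have h1 : ~~ (index w s < k) by rewrite ltnn.
have h2 : ~~ ~~ (index a s < k) by rewrite ia hw2.
have [z [z' [hz hz' ezz]]] := cross (A := fun x => ~~ (index x s < k)) cwa h1 h2.
move: hz'; rewrite negbK => hz'.
have z'v : z' != v by move: ezz; rewrite /ev => /and3P[].
have iz' : 0 < index z' s.
  by rewrite lt0n; apply: contra z'v; rewrite -iv0 => /eqP/(vo_inj vo) ->.
have inl : (index z' s).+1 \in label e s k z.
  by rewrite mem_label ?(ltnW hk) // hz' esym; move: ezz; rewrite /ev => /andP[].
have mz : 2 <= \max_(j <- label e s k z) j.
  apply: leq_trans (leq_bigmax_seq (F := fun j => j) (P := fun _ => true) _ inl isT).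
  by rewrite ltnS.
have sz : 1 <= size (label e s k z).
  by case: (label e s k z) inl.
have := Q k z hk; rewrite (vo_take vo) hz => /(_ isT).
rewrite (vo_nth vo).
by rewrite (leq_trans sw sz) (leq_ltn_trans mw mz).
Qed.

Lemma last_leaves s v : GS_ordering e s -> 1 < #|T| -> index v s = (size s).-1 ->
  L_branch_leaf e s v /\ F_branch_leaf e s v.
Proof.
move=> gs hT hv; have vo := gs.1.
have hv0 : 0 < index v s by rewrite hv (vo_size vo); lia.
have nochild : forall w, index v s < index w s -> False.
  by move=> w; move: (vo_ilt vo w); rewrite hv; lia.
split.
  rewrite /L_branch_leaf -lt0n hv0 andbT /L_leaf.
  have [p pp] := Lpar_exists gs hv0.
  apply: (tree_one (a := p)) => w; rewrite /tree_edge -lt0n hv0 /=.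
  case: (eqVneq w p) => [->|wp]; first by rewrite pp.
  apply/negP=> /orP[h|/andP[_ /and3P[_ h _]]]; last exact: nochild h.
  move: pp h; rewrite /L_parent => /and3P[evp ip /forallP mp] /and3P[evw iw /forallP mw].
  have := mp w; have := mw p; rewrite iw ip evw evp /= => h1 h2.
  by move: wp; rewrite (vo_inj vo (_ : index w s = index p s)) ?eqxx //; apply/eqP; rewrite eqn_leq h1 h2.
rewrite /F_branch_leaf -lt0n hv0 andbT /F_leaf.
have [p [pp ip]] := Fpar_exists gs hv0.
apply: (tree_one (a := p)) => w; rewrite /tree_edge -lt0n hv0 /=.
case: (eqVneq w p) => [->|wp]; first by rewrite pp.
apply/negP=> /orP[h|/andP[hw0 h]].
  move: pp h; rewrite /F_parent => /andP[evp /forallP mp] /andP[evw /forallP mw].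
  have := mp w; have := mw p; rewrite evw evp /= => h1 h2.
  by move: wp; rewrite (vo_inj vo (_ : index w s = index p s)) ?eqxx //; apply/eqP; rewrite eqn_leq h1 h2.
have wv : w != v by apply/eqP=> hh; move: h; rewrite hh /F_parent eirr.
have iwv : index w s < index v s.
  case: (ltngtP (index w s) (index v s)) => // hh; first by exfalso; apply: (nochild w).
  by move: wv; rewrite (vo_inj vo hh) eqxx.
rewrite -lt0n in hw0.
have [u [ewu hu]] := GS_earlier gs hw0.
move: h; rewrite /F_parent => /andP[_ /forallP /(_ u)]; rewrite ewu /= => hvu.
by move: (leq_ltn_trans hvu (ltn_trans hu iwv)); rewrite ltnn.
Qed.



Definition plab (p : seq T) (x : T) := [seq j <- iota 1 (size p) | e (nth x p j.-1) x].

Lemma label_plab s k x : k <= size s -> label e s k x = plab (take k s) x.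
Proof.
move=> hk; rewrite /label /plab size_takel //; apply: eq_in_filter => j.
rewrite mem_iota => hj; rewrite nth_take //; lia.
Qed.

Lemma exists_notin (p : seq T) : uniq p -> size p < #|T| -> exists y, y \notin p.
Proof.
move=> up hp; apply/existsP; apply: contraLR hp => /existsPn h.
rewrite -leqNgt cardT; apply: uniq_leq_size; first exact: enum_uniq.
by move=> x _; have := h x; rewrite negbK.
Qed.

Lemma full_vo (s : seq T) : uniq s -> size s = #|T| -> vertex_ordering s.
Proof.
move=> us hs; apply: uniq_perm => //; first exact: enum_uniq.
move=> x; rewrite mem_enum; apply: contraT => xs.
have : size (x :: s) <= #|T|.
  rewrite cardT; apply: uniq_leq_size; first by rewrite /= xs.
  by move=> y _; rewrite mem_enum.
by rewrite /= hs ltnn.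
Qed.

Section Build.
Variables (key : seq T -> T -> nat) (d : T).

Definition choose (p : seq T) : T :=
  if [pick x | x \notin p] is Some x0 then [arg max_(x > x0 | x \notin p) key p x] else d.

Lemma choose_spec p y : y \notin p ->
  choose p \notin p /\ forall z, z \notin p -> key p z <= key p (choose p).
Proof.
rewrite /choose; case: pickP => [x0 hx0|h]; last by move=> hy; move: (h y); rewrite /= hy.
move=> _; case: (@arg_maxnP T x0 (fun x => x \notin p) (fun x => key p x) hx0) => m hm maxm.
by split => // z hz; exact: maxm.
Qed.

Fixpoint build n p := if n is n'.+1 then build n' (rcons p (choose p)) else p.

Lemma build_spec n p : uniq p -> size p + n = #|T| ->
  [/\ uniq (build n p), size (build n p) = #|T|, take (size p) (build n p) = p &
   forall k, size p <= k < #|T| -> nth d (build n p) k = choose (take k (build n p))].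
Proof.
elim: n p => [|n IH] p up hp /=.
  rewrite addn0 in hp; split; [by [] | exact: hp | by rewrite take_size |].
  by move=> k /andP[h1 h2]; move: h2; rewrite -hp ltnNge h1.
have hlt : size p < #|T| by rewrite -hp addnS ltnS leq_addr.
have [y hy] := exists_notin up hlt.
have [cn _] := choose_spec hy.
have up' : uniq (rcons p (choose p)) by rewrite rcons_uniq cn.
have := IH _ up'; rewrite size_rcons addSnnS => /(_ hp) [us ss ts hk].
have tp : take (size p) (build n (rcons p (choose p))) = p.
  by rewrite -(take_takel _ (leqnSn (size p))) ts -cats1 take_size_cat.
split => // k /andP[h1 h2]; case: (ltngtP k (size p)) => [h|h|->].
- by move: h1; rewrite leqNgt h.
- by apply: hk; rewrite h h2.
rewrite tp -(nth_take _ (ltnSn (size p))) ts nth_rcons ltnn eqxx //.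
Qed.

Definition Built (s : seq T) := vertex_ordering s /\
  forall k y, k < size s -> y \notin take k s ->
    key (take k s) y <= key (take k s) (nth y s k).

Lemma built_exists : exists s, Built s.
Proof.
have [us ss _ hk] := build_spec (p := [::]) (n := #|T|) isT erefl.
set s := build _ _ in us ss hk *.
have vo := full_vo us ss.
exists s; split => // k y hks hy.
rewrite (set_nth_default d) // hk; last by rewrite -ss hks.
by have [_ ->] := choose_spec hy.
Qed.
End Build.

Lemma ncut_conn v a b : ~ cut_vertex e v -> a != v -> b != v -> connect (ev v) a b.
Proof.
move=> nc av bv; case c: (connect (ev v) a b) => //; exfalso.
by apply: nc; exists a, b; split => //; rewrite /ev in c; rewrite c.
Qed.

Lemma max_le s k x : \max_(j <- label e s k x) j <= k.
Proof.
apply/bigmax_leqP_seq => j /label_ge1 /andP[] //.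
Qed.

Lemma max_pos s k x : label e s k x != [::] -> 0 < \max_(j <- label e s k x) j.
Proof.
case H: (label e s k x) => [|j l] // _.
have jin : j \in label e s k x by rewrite H mem_head.
rewrite -H; apply: leq_trans (leq_bigmax_seq (F := fun j => j) (P := fun _ => true) _ jin isT).
by have /andP[] := label_ge1 jin.
Qed.

Lemma arith1 a b c d N : c <= N -> d <= N -> b * N.+1 + d <= a * N.+1 + c -> a < b -> False.
Proof.
move=> hc hd h ab.
have h1 : a.+1 * N.+1 <= b * N.+1 by rewrite leq_mul2r ab orbT.
have h2 : a * N.+1 + c < a.+1 * N.+1 by rewrite mulSn addnC ltn_add2r ltnS.
have := leq_trans h (leq_trans (ltnW h2) h1).
move: h2 h1 h; lia.
Qed.

Lemma arith2 a b c d N : c <= N -> d <= N -> b * N.+1 + d <= a * N.+1 + c -> a <= b -> c < d -> False.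
Proof.
move=> hc hd h ab cd; case: (ltngtP a b) => [lt|gt|eq].
- exact: (arith1 hc hd h lt).
- by move: ab; rewrite leqNgt gt.
- by move: h; rewrite eq leq_add2l leqNgt cd.
Qed.

Lemma first_v (key : seq T -> T -> nat) s v :
  (forall x, key [::] x = (x == v)) -> Built key s -> index v s = 0.
Proof.
move=> hk [vo h].
have hs : 0 < size s by rewrite (leq_ltn_trans (leq0n _) (vo_ilt vo v)).
have := h 0 v hs; rewrite take0 !hk eqxx => /(_ isT).
by case: eqP => // <- _; rewrite vo_idx.
Qed.

Definition kD v (p : seq T) x :=
  if size p == 0 then nat_of_bool (x == v) else \max_(j <- plab p x) j.
Definition kM v (p : seq T) x :=
  if size p == 0 then nat_of_bool (x == v)
  else size (plab p x) * #|T|.+1 + \max_(j <- plab p x) j.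
Definition kG v (p : seq T) x := (plab p x != [::]) * 2 + (x != v).

Lemma DFS_exists v : exists s, DFS_ordering e s /\ index v s = 0.
Proof.
have [s [vo h]] := built_exists (kD v) v.
exists s; split; last exact: (first_v (key := kD v)).
split => // k y hk hy; have := h k y hk hy.
case: (posnP k) => [->|hk0]; first by rewrite /DFS_prec /label /= big_nil.
rewrite /kD size_takel ?(ltnW hk) // eqn0Ngt hk0 /= -!label_plab ?(ltnW hk) //.
move=> hmax; rewrite /DFS_prec ltnNge hmax orbF /=.
apply/negP=> /andP[/eqP hx hy'].
move: hmax; rewrite hx big_nil leqn0 => /eqP h0.
by move: (max_pos hy'); rewrite h0.
Qed.

Lemma MCS_exists v : exists s, [/\ MCS_ordering e s, Qcond s & index v s = 0].
Proof.
have [s [vo h]] := built_exists (kM v) v.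
have hkey : forall k y, 0 < k -> k < size s -> y \notin take k s ->
  size (label e s k y) * #|T|.+1 + \max_(j <- label e s k y) j <=
  size (label e s k (nth y s k)) * #|T|.+1 + \max_(j <- label e s k (nth y s k)) j.
  move=> k y hk0 hk hy; have := h k y hk hy.
  by rewrite /kM size_takel ?(ltnW hk) // eqn0Ngt hk0 /= -!label_plab ?(ltnW hk).
have hN : forall k x, k < size s -> \max_(j <- label e s k x) j <= #|T|.
  move=> k x hk; rewrite -(vo_size vo); exact: leq_trans (max_le _ _ _) (ltnW hk).
exists s; split; last exact: (first_v (key := kM v)).
- split => // k y hk hy.
  case: (posnP k) => [->|hk0]; first by rewrite /MCS_prec /label.
  rewrite /MCS_prec; apply/negP => lt.
  exact: (arith1 (hN k _ hk) (hN k _ hk) (hkey k y hk0 hk hy) lt).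
- move=> k y hk hy.
  case: (posnP k) => [->|hk0]; first by rewrite /label /= big_nil.
  apply/negP => /andP[le lt].
  exact: (arith2 (hN k _ hk) (hN k _ hk) (hkey k y hk0 hk hy) le lt).
Qed.

Lemma GS_last_exists v : 1 < #|T| -> ~ cut_vertex e v ->
  exists s, GS_ordering e s /\ index v s = (size s).-1.
Proof.
move=> hT nc.
have [s [vo h]] := built_exists (kG v) v.
have hkey : forall k y, k < size s -> y \notin take k s ->
  (label e s k y != [::]) * 2 + (y != v) <=
  (label e s k (nth y s k) != [::]) * 2 + (nth y s k != v).
  by move=> k y hk hy; have := h k y hk hy; rewrite /kG -!label_plab ?(ltnW hk).
have gs : GS_ordering e s.
  split => // k y hk hy; have := hkey k y hk hy; rewrite /GS_prec.
  case: (label e s k (nth y s k)) => [|a l] //=.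
  case: (label e s k y) => [|b l'] //=.
  by case: (_ != v); case: (_ != v).
exists s; split => //.
have hs := vo_size vo.
move ek: (index v s) => k.
have hv : k < size s by rewrite -ek vo_ilt.
case: (ltngtP k (size s).-1) => [lt|gt|//]; last by exfalso; lia.
exfalso.
have hk1 : k.+1 < size s by lia.
pose y0 := nth v s k.+1.
have iy0 : index y0 s = k.+1 by rewrite vo_idx.
have y0v : y0 != v by apply/eqP=> hh; move: iy0; rewrite hh ek; lia.
have y0n : y0 \notin take k s by rewrite (vo_take vo) iy0 ltnNge leqnSn.
have := hkey k y0 hv y0n; rewrite (_ : nth _ s k = v) ?eqxx ?addn0; last by rewrite -ek vo_nth.
case: (posnP k) => [hk0|hk0].
  by rewrite hk0 /label /= y0v.
pose s1 := nth v s 0.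
have i1 : index s1 s = 0 by rewrite vo_idx // (leq_ltn_trans (leq0n _) hv).
have s1v : s1 != v by apply/eqP=> hh; move: i1; rewrite hh ek; lia.
have c := ncut_conn nc s1v y0v.
have h1 : index s1 s < k by rewrite i1.
have h2 : ~~ (index y0 s < k) by rewrite iy0 ltnNge leqnSn.
have [z [z' [hz hz' ezz]]] := cross (A := fun x => index x s < k) c h1 h2.
have z'v : z' != v by move: ezz; rewrite /ev => /and3P[].
have z'n : z' \notin take k s by rewrite (vo_take vo).
have inl : (index z s).+1 \in label e s k z'.
  by rewrite mem_label ?(ltnW hv) // hz; move: ezz; rewrite /ev => /andP[].
have := hkey k z' hv z'n; rewrite (_ : nth _ s k = v) ?eqxx ?addn0; last by rewrite -ek vo_nth.
rewrite z'v.
case: (label e s k z') inl => [|b l] //= _.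
by case: (_ != [::]).
Qed.

Lemma main_in v : 1 < #|T| ->
  [<->
   exists s, [/\ DFS_ordering e s, index v s = 0 & L_root_leaf e s v];
   forall s, DFS_ordering e s -> index v s = 0 -> L_root_leaf e s v;
   exists s, MCS_ordering e s /\ L_root_leaf e s v;
   exists s, GS_ordering e s /\ L_root_leaf e s v;
   exists s, GS_ordering e s /\ L_branch_leaf e s v;
   exists s, GS_ordering e s /\ F_branch_leaf e s v;
   exists s, GS_ordering e s /\ index v s = (size s).-1;
   ~ cut_vertex e v].
Proof.
move=> hT.
have iv_viii : forall s, GS_ordering e s -> L_root_leaf e s v -> ~ cut_vertex e v.
  by move=> s gs /andP[lf /eqP i0]; apply: (nec_root gs hT i0 lf).
have viii_ii : ~ cut_vertex e v ->
    forall s, DFS_ordering e s -> index v s = 0 -> L_root_leaf e s v.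
  by move=> nc s ds i0; apply: (suff_root (DFS_GS ds) (DFS_Q ds) hT i0 nc).
have viii_vii : ~ cut_vertex e v -> exists s, GS_ordering e s /\ index v s = (size s).-1.
  exact: GS_last_exists.
tfae.
- move=> [s [ds i0 lf]]; apply: viii_ii; exact: (iv_viii s (DFS_GS ds) lf).
- move=> h; have [s [ds i0]] := DFS_exists v.
  have nc := iv_viii s (DFS_GS ds) (h s ds i0).
  have [s' [ms qs i0']] := MCS_exists v.
  by exists s'; split => //; apply: (suff_root (MCS_GS ms) qs hT i0' nc).
- by move=> [s [ms lf]]; exists s; split => //; exact: MCS_GS.
- move=> [s [gs lf]]; have nc := iv_viii s gs lf.
  have [s' [gs' hl]] := viii_vii nc.
  by exists s'; split => //; have [] := last_leaves gs' hT hl.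
- move=> [s [gs lf]]; have nc := nec_Lbranch gs lf.
  have [s' [gs' hl]] := viii_vii nc.
  by exists s'; split => //; have [] := last_leaves gs' hT hl.
- move=> [s [gs lf]]; exact: viii_vii (nec_Fbranch gs lf).
- by move=> [s [gs hl]]; apply: (nec_last gs hT hl).
- move=> nc; have [s [ds i0]] := DFS_exists v.
  by exists s; split => //; apply: viii_ii.
Qed.

End Th.


Theorem theorem1 (T : finType) (e : rel T) (v : T) :
  simple_graph e -> connected_graph e -> 1 < #|T| ->
  [<->
   (* (i) *)
   exists s, [/\ DFS_ordering e s, index v s = 0 & L_root_leaf e s v];
   (* (ii) *)
   forall s, DFS_ordering e s -> index v s = 0 -> L_root_leaf e s v;
   (* (iii) *)
   exists s, MCS_ordering e s /\ L_root_leaf e s v;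
   (* (iv) *)
   exists s, GS_ordering e s /\ L_root_leaf e s v;
   (* (v) *)
   exists s, GS_ordering e s /\ L_branch_leaf e s v;
   (* (vi) *)
   exists s, GS_ordering e s /\ F_branch_leaf e s v;
   (* (vii) *)
   exists s, GS_ordering e s /\ index v s = (size s).-1;
   (* (viii) *)
   ~ cut_vertex e v].
Proof.
move=> [esym eirr] econ hT.
exact: (main_in esym eirr econ v hT).
Qed.
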